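(* Let $(A,\mathcal H)$ be a left Hopf algebroid such that ${}_s\mathcal H$ is $A$-flat. Let $B$ be a right $\mathcal H$-comodule $A^o$-subring of $\mathcal H$ via $t$ such that the inclusion $B\to\mathcal H$ is a pure morphism of right $B$-modules and $\gamma(B)\subseteq B\otimes_{A^o}\mathcal H$. Then $B=\mathcal H^{\mathrm{co}\,\mathcal H/\mathcal HB^+}$.
   Context: $\Bbbk$ is a field. A left bialgebroid $(A,\mathcal H)$: $\Bbbk$-algebras $A,\mathcal H$, algebra maps $s:A\to\mathcal H$, $t:A^o\to\mathcal H$ with commuting images, $A$-bilinear $\Delta:\mathcal H\to\mathcal H\otimes_A\mathcal H$, $\varepsilon:\mathcal H\to A$ (bimodule structure $a\cdot h\cdot b=s(a)t(b)h$; $\mathcal H\otimes_A\mathcal H$ = quotient of $\mathcal H\otimes\mathcal H$ by span of $t(a)x\otimes y-x\otimes s(a)y$), with $(\mathcal H,\Delta,\varepsilon)$ a coassociative counital $A$-coring, $\Delta$ an algebra map into the Takeuchi product $\{\sum x_i\otimes_Ay_i:\sum x_it(a)\otimes_Ay_i=\sum x_i\otimes_Ay_is(a)\ \forall a\}$, $\varepsilon(xs(\varepsilon(y)))=\varepsilon(xy)=\varepsilon(xt(\varepsilon(y)))$, $\varepsilon(1)=1$; $\Delta(x)=\sum x_1\otimes_Ax_2$, $\mathcal H^+=\ker\varepsilon$, $B^+=B\cap\mathcal H^+$. It is a left Hopf algebroid if $\beta:\mathcal H\otimes_{A^o}\mathcal H\to\mathcal H\otimes_A\mathcal H$, $x\otimes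 y\mapsto\sum x_1\otimes_Ax_2y$ is bijective ($\mathcal H\otimes_{A^o}\mathcal H$ = quotient by span of $xt(a)\otimes y-x\otimes t(a)y$); $\gamma(x)=\beta^{-1}(x\otimes_A1)$, and ''$\gamma(B)\subseteq B\otimes_{A^o}\mathcal H$'' means $\gamma(B)$ lies in the image of $B\otimes_{A^o}\mathcal H\to\mathcal H\otimes_{A^o}\mathcal H$. ''${}_s\mathcal H$ is $A$-flat'': flat as left $A$-module via $s$. A right $\mathcal H$-comodule $A^o$-subring via $t$: a subalgebra $B\supseteq t(A)$ with coassociative counital right $A$-linear coaction $\delta:B\to B\otimes_A\mathcal H$ ($b\cdot a=t(a)b$; $\mathcal H$ left via $s$) with $(\iota\otimes_A\mathcal H)\delta=\Delta\iota$. For a left ideal $I$ with $\varepsilon(I)=0$ and $\Delta(I)\subseteq$ image of $I\otimes_A\mathcal H+\mathcal H\otimes_AI$ (e.g. $I=\mathcal HB^+$), with projection $\pi$: $\mathcal H^{\mathrm{co}\,\mathcal H/I}=\{x:\sum\pi(x_1)\otimes_Ax_2=\pi(1)\otimes_Ax\}$. *)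

(* Defs.v *)
From HB Require Import structures.
From Stdlib Require List.
From mathcomp Require Import all_boot all_order all_algebra.
Set Implicit Arguments. Unset Strict Implicit. Unset Printing Implicit Defensive.
Import GRing.Theory.
Local Open Scope ring_scope.

(* An element of a balanced
   tensor product  X (x)_A Y  is represented by a finite list of pairs
   (a formal sum of simple tensors), and two such lists are declared equal
   in the tensor product iff they have the same image under EVERY
   biadditive balanced map into an abelian group (universal property of the
   tensor product).  Elements of H/I are represented by elements of H. *)

Section Bialgebroid.
Variables (k : fieldType) (A H : algType k) (s t : A -> H).

(* Equality in  P (x)_A H / (image of Z (x)_A H),  where the first factor
   ranges in a subset P of H (closed under t(A) * _) with right A-action
   x.a = t(a) x, and H is a left A-module via s.  With P = everything and
   Z = nothing this is H (x)_A H; with P = B it is B (x)_A H; with Z = I a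
   left ideal it is (H/I) (x)_A H. *)
Definition tensA_gen (P Z : H -> Prop) (l1 l2 : seq (H * H)) : Prop :=
  forall (V : zmodType) (f : H -> H -> V),
    (forall x x' y, P x -> P x' -> f (x + x') y = f x y + f x' y) ->
    (forall x y y', P x -> f x (y + y') = f x y + f x y') ->
    (forall a x y, P x -> f (t a * x) y = f x (s a * y)) ->
    (forall x y, Z x -> f x y = 0) ->
    \sum_(p <- l1) f p.1 p.2 = \sum_(p <- l2) f p.1 p.2.

Definition tensA := tensA_gen (fun _ => True) (fun _ => False).

Definition tensA3 (P : H -> Prop) (l1 l2 : seq (H * H * H)) : Prop :=
  forall (V : zmodType) (f : H -> H -> H -> V),
    (forall x x' y z, P x -> P x' -> f (x + x') y z = f x y z + f x' y z) ->
    (forall x y y' z, P x -> f x (y + y') z = f x y z + f x y' z) ->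
    (forall x y z z', P x -> f x y (z + z') = f x y z + f x y z') ->
    (forall a x y z, P x -> f (t a * x) y z = f x (s a * y) z) ->
    (forall a x y z, P x -> f x (t a * y) z = f x y (s a * z)) ->
    \sum_(p <- l1) f p.1.1 p.1.2 p.2 = \sum_(p <- l2) f p.1.1 p.1.2 p.2.

(* equality in H (x)_{A^o} H : relation  x t(a) (x) y = x (x) t(a) y *)
Definition tensAo (l1 l2 : seq (H * H)) : Prop :=
  forall (V : zmodType) (f : H -> H -> V),
    (forall x x' y, f (x + x') y = f x y + f x' y) ->
    (forall x y y', f x (y + y') = f x y + f x y') ->
    (forall a x y, f (x * t a) y = f x (t a * y)) ->
    \sum_(p <- l1) f p.1 p.2 = \sum_(p <- l2) f p.1 p.2.

Variables (Delta : H -> seq (H * H)) (eps : H -> A).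

Record is_left_bialgebroid : Prop := {
  s_lin : forall (c : k) a b, s (c *: a + b) = c *: s a + s b;
  s_mul : forall a b, s (a * b) = s a * s b;
  s_one : s 1 = 1;
  t_lin : forall (c : k) a b, t (c *: a + b) = c *: t a + t b;
  t_mul : forall a b, t (a * b) = t b * t a;   (* algebra map A^o -> H *)
  t_one : t 1 = 1;
  st_comm : forall a b, s a * t b = t b * s a;
  Delta_add : forall x y, tensA (Delta (x + y)) (Delta x ++ Delta y);
  Delta_scale : forall (c : k) x,
      tensA (Delta (c *: x)) [seq (c *: p.1, p.2) | p <- Delta x];
  Delta_s : forall a x, tensA (Delta (s a * x)) [seq (s a * p.1, p.2) | p <- Delta x];
  Delta_t : forall a x, tensA (Delta (t a * x)) [seq (p.1, t a * p.2) | p <- Delta x];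
  eps_add : forall x y, eps (x + y) = eps x + eps y;
  eps_scale : forall (c : k) x, eps (c *: x) = c *: eps x;
  eps_s : forall a x, eps (s a * x) = a * eps x;
  eps_t : forall a x, eps (t a * x) = eps x * a;
  Delta_coass : forall x,
      tensA3 (fun _ => True)
        [seq (q.1, q.2, p.2) | p <- Delta x, q <- Delta p.1]
        [seq (p.1, q.1, q.2) | p <- Delta x, q <- Delta p.2];
  eps_counit_l : forall x, \sum_(p <- Delta x) s (eps p.1) * p.2 = x;
  eps_counit_r : forall x, \sum_(p <- Delta x) t (eps p.2) * p.1 = x;
  (* Delta lands in the Takeuchi product and is an algebra map into it *)
  Delta_takeuchi : forall x a,
      tensA [seq (p.1 * t a, p.2) | p <- Delta x] [seq (p.1, p.2 * s a) | p <- Delta x];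
  Delta_mul : forall x y,
      tensA (Delta (x * y)) [seq (p.1 * q.1, p.2 * q.2) | p <- Delta x, q <- Delta y];
  Delta_one : tensA (Delta 1) [:: (1, 1)];
  eps_mul_s : forall x y, eps (x * s (eps y)) = eps (x * y);
  eps_mul_t : forall x y, eps (x * t (eps y)) = eps (x * y);
  eps_one : eps 1 = 1
}.

(* beta : H (x)_{A^o} H -> H (x)_A H,  x (x) y |-> sum x_1 (x) x_2 y *)
Definition beta (l : seq (H * H)) : seq (H * H) :=
  [seq (q.1, q.2 * p.2) | p <- l, q <- Delta p.1].

Definition is_left_Hopf : Prop :=
  is_left_bialgebroid /\
  (forall l1 l2, tensA (beta l1) (beta l2) -> tensAo l1 l2) /\
  (forall m, exists l, tensA (beta l) m).

(* gamma(B) \subseteq B (x)_{A^o} H : gamma(b) = beta^{-1}(b (x) 1) lies in the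
   image of B (x)_{A^o} H *)
Definition gamma_in (B : H -> Prop) : Prop :=
  forall b, B b -> exists l : seq (H * H),
    (forall p, List.In p l -> B p.1) /\ tensA (beta l) [:: (b, 1)].

(* {}_s H is flat as a left A-module: for every injective morphism g : M -> N
   of right A-modules, g (x)_A H : M (x)_A H -> N (x)_A H is injective. *)
Definition right_Amod (M : zmodType) (act : M -> A -> M) : Prop :=
  [/\ forall m m' a, act (m + m') a = act m a + act m' a,
      forall m a a', act m (a + a') = act m a + act m a',
      forall m a a', act m (a * a') = act (act m a) a'
    & forall m, act m 1 = m].

Definition tensMH (M : zmodType) (act : M -> A -> M) (l1 l2 : seq (M * H)) : Prop :=
  forall (V : zmodType) (f : M -> H -> V),
    (forall m m' y, f (m + m') y = f m y + f m' y) ->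
    (forall m y y', f m (y + y') = f m y + f m y') ->
    (forall a m y, f (act m a) y = f m (s a * y)) ->
    \sum_(p <- l1) f p.1 p.2 = \sum_(p <- l2) f p.1 p.2.

Definition s_flat : Prop :=
  forall (M N : zmodType) (actM : M -> A -> M) (actN : N -> A -> N) (g : M -> N),
    right_Amod actM -> right_Amod actN ->
    (forall m m', g (m + m') = g m + g m') ->
    (forall m a, g (actM m a) = actN (g m) a) ->
    injective g ->
    forall l1 l2 : seq (M * H),
      tensMH actN [seq (g p.1, p.2) | p <- l1] [seq (g p.1, p.2) | p <- l2] ->
      tensMH actM l1 l2.

Record is_comodule_subring (B : H -> Prop) (delta : H -> seq (H * H)) : Prop := {
  B_add : forall x y, B x -> B y -> B (x + y);
  B_scale : forall (c : k) x, B x -> B (c *: x);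
  B_mul : forall x y, B x -> B y -> B (x * y);
  B_t : forall a, B (t a);
  delta_in : forall b, B b -> forall p, List.In p (delta b) -> B p.1;
  delta_add : forall b b', B b -> B b' ->
      tensA_gen B (fun _ => False) (delta (b + b')) (delta b ++ delta b');
  delta_Alin : forall a b, B b ->
      tensA_gen B (fun _ => False) (delta (t a * b)) [seq (p.1, t a * p.2) | p <- delta b];
  delta_coass : forall b, B b ->
      tensA3 B [seq (q.1, q.2, p.2) | p <- delta b, q <- delta p.1]
               [seq (p.1, q.1, q.2) | p <- delta b, q <- Delta p.2];
  delta_counit : forall b, B b -> \sum_(p <- delta b) t (eps p.2) * p.1 = b;
  delta_Delta : forall b, B b -> tensA (delta b) (Delta b)
}.

(* the inclusion B -> H is a pure morphism of right B-modules: for every left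
   B-module N, B (x)_B N -> H (x)_B N is injective *)
Definition left_Bmod (B : H -> Prop) (N : zmodType) (act : H -> N -> N) : Prop :=
  [/\ forall b n n', B b -> act b (n + n') = act b n + act b n',
      forall b b' n, B b -> B b' -> act (b + b') n = act b n + act b' n,
      forall b b' n, B b -> B b' -> act (b * b') n = act b (act b' n)
    & forall n, act 1 n = n].

Definition tensB_gen (B P : H -> Prop) (N : zmodType) (act : H -> N -> N)
    (l1 l2 : seq (H * N)) : Prop :=
  forall (V : zmodType) (f : H -> N -> V),
    (forall x x' n, P x -> P x' -> f (x + x') n = f x n + f x' n) ->
    (forall x n n', P x -> f x (n + n') = f x n + f x n') ->
    (forall x b n, P x -> B b -> f (x * b) n = f x (act b n)) ->
    \sum_(p <- l1) f p.1 p.2 = \sum_(p <- l2) f p.1 p.2.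

Definition pure_inclusion (B : H -> Prop) : Prop :=
  forall (N : zmodType) (act : H -> N -> N), left_Bmod B act ->
    forall l1 l2 : seq (H * N),
      (forall p, List.In p l1 -> B p.1) -> (forall p, List.In p l2 -> B p.1) ->
      tensB_gen B (fun _ => True) act l1 l2 ->
      tensB_gen B B act l1 l2.

(* I = H B^+, the left ideal generated by B^+ = B \cap ker eps *)
Definition HBplus (B : H -> Prop) (x : H) : Prop :=
  exists l : seq (H * H),
    (forall p, List.In p l -> B p.2 /\ eps p.2 = 0) /\ x = \sum_(p <- l) p.1 * p.2.

(* H^{co H/I} = { x | sum pi(x_1) (x)_A x_2 = pi(1) (x)_A x } *)
Definition coinvariants (I : H -> Prop) (x : H) : Prop :=
  tensA_gen (fun _ => True) I (Delta x) [:: (1, x)].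

End Bialgebroid.

(* Main.v *)
From HB Require Import structures.
Require Import Defs.
From mathcomp Require Import all_boot all_order all_algebra.
From Stdlib Require Import ClassicalEpsilon.
From mathcomp Require Import ring_quotient generic_quotient boolp.
Set Implicit Arguments. Unset Strict Implicit. Unset Printing Implicit Defensive.
Import GRing.Theory.
Local Open Scope ring_scope.
Local Open Scope quotient_scope.

Lemma addf_sum (V W : zmodType) (phi : W -> V)
  (hphi : forall x y, phi (x + y) = phi x + phi y) (I : Type) (r : seq I) (F : I -> W) :
  phi (\sum_(i <- r) F i) = \sum_(i <- r) phi (F i).
Proof.
have h0 : phi 0 = 0.
  have h := hphi 0 0; rewrite addr0 in h.
  have : phi 0 + phi 0 - phi 0 = phi 0 - phi 0 by rewrite -h.
  by rewrite addrK subrr.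
elim: r => [|i r IH]; first by rewrite !big_nil.
by rewrite !big_cons hphi IH.
Qed.

Section Main.
Variables (k : fieldType) (A H : algType k) (s t : A -> H)
  (Delta : H -> seq (H * H)) (eps : H -> A).

Definition Abal (V : zmodType) (f : H -> H -> V) :=
  [/\ forall x x' y, f (x + x') y = f x y + f x' y,
      forall x y y', f x (y + y') = f x y + f x y' &
      forall a x y, f (t a * x) y = f x (s a * y)].

Notation sumf f l := (\sum_(p <- l) f p.1 p.2).
Notation tA := (tensA s t).

Lemma tensAP l1 l2 : tA l1 l2 <-> forall V f, @Abal V f -> sumf f l1 = sumf f l2.
Proof.
split.
  move=> h V f [h1 h2 h3]; apply: h.
  - by move=> x x' y _ _; apply: h1.
  - by move=> x y y' _; apply: h2.
  - by move=> a x y _; apply: h3.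
  - by [].
move=> h V f h1 h2 h3 _; apply: h; split.
- by move=> x x' y; apply: h1.
- by move=> x y y'; apply: h2.
- by move=> a x y; apply: h3.
Qed.

Lemma tA_refl l : tA l l.
Proof. by apply/tensAP. Qed.
Lemma tA_sym l1 l2 : tA l1 l2 -> tA l2 l1.
Proof. by move/tensAP=> h; apply/tensAP=> V f hf; rewrite h. Qed.
Lemma tA_trans l1 l2 l3 : tA l1 l2 -> tA l2 l3 -> tA l1 l3.
Proof. by move/tensAP=> h /tensAP h'; apply/tensAP=> V f hf; rewrite h // h'. Qed.
Lemma tA_cat l1 l2 m1 m2 : tA l1 l2 -> tA m1 m2 -> tA (l1 ++ m1) (l2 ++ m2).
Proof. by move/tensAP=> h /tensAP h'; apply/tensAP=> V f hf; rewrite !big_cat h // h'. Qed.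

Lemma sumf_allp (V : zmodType) (f : H -> H -> V) (I J : Type) (l : seq I)
  (m : I -> seq J) (h : I -> J -> H * H) :
  sumf f [seq h i j | i <- l, j <- m i] = \sum_(i <- l) \sum_(j <- m i) f (h i j).1 (h i j).2.
Proof. exact: big_allpairs_dep. Qed.

Lemma sumf_map (V : zmodType) (f : H -> H -> V) (I : Type) (l : seq I) (h : I -> H * H) :
  sumf f [seq h i | i <- l] = \sum_(i <- l) f (h i).1 (h i).2.
Proof. exact: big_map. Qed.

Lemma sum_beta (V : zmodType) (f : H -> H -> V) l :
  sumf f (beta Delta l) = \sum_(p <- l) sumf (fun x y => f x (y * p.2)) (Delta p.1).
Proof. by rewrite /beta sumf_allp. Qed.

Lemma Abal_rmul (V : zmodType) (f : H -> H -> V) w : Abal f -> Abal (fun x y => f x (y * w)).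
Proof.
case=> h1 h2 h3; split => *; [exact: h1| by rewrite mulrDl h2| by rewrite h3 mulrA].
Qed.


Lemma Abal_mul (V : zmodType) (f : H -> H -> V) x w : Abal f -> Abal (fun X Y => f (X * x) (Y * w)).
Proof.
case=> h1 h2 h3; split => *; [by rewrite mulrDl h1| by rewrite mulrDl h2| by rewrite -mulrA h3 mulrA].
Qed.

Lemma sumf1 (V : zmodType) (f : H -> H -> V) x y : sumf f [:: (x, y)] = f x y.
Proof. by rewrite big_cons big_nil addr0. Qed.

Section Hopf.
Hypothesis bialg : is_left_bialgebroid s t Delta eps.

Lemma Lstar (h b v : H) lb lh : tA (beta Delta lb) [:: (b,1)] -> tA (beta Delta lh) [:: (h,1)] ->
  tA (beta Delta [seq (q.1 * r.1, r.2 * q.2 * v) | q <- lh, r <- lb]) [:: (h*b, v)].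
Proof.
move=> /tensAP hb /tensAP hh; apply/tensAP => V f hf.
rewrite sum_beta big_allpairs_dep sumf1 /=.
have step1 : forall q r : H * H, sumf (fun x y => f x (y * (r.2 * q.2 * v))) (Delta (q.1 * r.1)) =
   \sum_(u <- Delta q.1) \sum_(w <- Delta r.1) f (u.1 * w.1) (u.2 * w.2 * (r.2 * q.2 * v)).
  move=> q r.
  by rewrite ((tensAP _ _).1 (Delta_mul bialg q.1 r.1) _ _ (Abal_rmul (r.2 * q.2 * v) hf)) big_allpairs_dep.
transitivity (\sum_(q <- lh) \sum_(r <- lb) \sum_(u <- Delta q.1) \sum_(w <- Delta r.1)
   f (u.1 * w.1) (u.2 * w.2 * (r.2 * q.2 * v))).
  by apply: eq_bigr => q _; apply: eq_bigr => r _; rewrite step1.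
have step3 : forall q : H * H, \sum_(r <- lb) \sum_(u <- Delta q.1) \sum_(w <- Delta r.1)
   f (u.1 * w.1) (u.2 * w.2 * (r.2 * q.2 * v)) = \sum_(u <- Delta q.1) f (u.1 * b) (u.2 * q.2 * v).
  move=> q.
  pose W := q.2 * v.
  pose Phi x y := \sum_(u <- Delta q.1) f (u.1 * x) (u.2 * y * W).
  have hPhi : Abal Phi.
    case: hf => h1 h2 h3; split.
    - move=> x x' y; rewrite /Phi -big_split /=; apply: eq_bigr => u _.
      by rewrite mulrDr h1.
    - move=> x y y'; rewrite /Phi -big_split /=; apply: eq_bigr => u _.
      by rewrite mulrDr mulrDl h2.
    - move=> a x y; rewrite /Phi.
      have := (tensAP _ _).1 (Delta_takeuchi bialg q.1 a) _ _ (Abal_mul x (y * W) (And3 h1 h2 h3)).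
      rewrite !big_map /= => e.
      transitivity (\sum_(i <- Delta q.1) f (i.1 * t a * x) (i.2 * (y * W))).
        by apply: eq_bigr => u _; rewrite !mulrA.
      rewrite e; apply: eq_bigr => u _; by rewrite !mulrA.
  transitivity (sumf Phi (beta Delta lb)).
    rewrite sum_beta; apply: eq_bigr => r _.
    rewrite exchange_big /=; apply: eq_bigr => w _; rewrite /Phi; apply: eq_bigr => u _.
    by rewrite /W !mulrA.
  rewrite hb // sumf1 /Phi; apply: eq_bigr => u _.
  by rewrite /W mulr1 !mulrA.
transitivity (\sum_(q <- lh) \sum_(u <- Delta q.1) f (u.1 * b) (u.2 * q.2 * v)).
  apply: eq_bigr => q _; rewrite -step3; apply: eq_bigr => r _.
  by rewrite exchange_big.
transitivity (sumf (fun X Y => f (X * b) (Y * v)) (beta Delta lh)).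
  rewrite (sum_beta (fun X Y => f (X * b) (Y * v))) /=; done.
rewrite (hh _ (fun X Y => f (X * b) (Y * v))); last exact: Abal_mul.
by rewrite big_cons big_nil addr0 mul1r.
Qed.


Lemma In_mem (T : eqType) (x : T) l : x \in l -> List.In x l.
Proof.
elim: l => [|y l IH] //=; rewrite in_cons => /orP [/eqP ->|/IH]; [by left|by right].
Qed.

Lemma beta_cat l1 l2 : beta Delta (l1 ++ l2) = beta Delta l1 ++ beta Delta l2.
Proof. by rewrite /beta allpairs_cat. Qed.

Lemma beta_single (V : zmodType) (f : H -> H -> V) u v :
  sumf f (beta Delta [:: (u, v)]) = sumf (fun X Y => f X (Y * v)) (Delta u).
Proof. by rewrite sum_beta big_cons big_nil addr0. Qed.

Lemma s_add a b : s (a + b) = s a + s b.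
Proof. by have := s_lin bialg 1 a b; rewrite !scale1r. Qed.

Lemma s0 : s 0 = 0.
Proof.
have h := s_add 0 0; rewrite addr0 in h.
have : s 0 + s 0 - s 0 = s 0 - s 0 by rewrite -h.
by rewrite addrK subrr.
Qed.

Lemma gamma_sum b lb : tA (beta Delta lb) [:: (b, 1)] -> \sum_(r <- lb) r.1 * r.2 = s (eps b).
Proof.
move/tensAP => e.
have hf : Abal (fun x y : H => s (eps x) * y).
  split.
  - by move=> x x' y; rewrite (eps_add bialg) s_add mulrDl.
  - by move=> x y y'; rewrite mulrDr.
  - by move=> a x y; rewrite (eps_t bialg) (s_mul bialg) mulrA.
have := e _ _ hf; rewrite big_seq1 mulr1 => <-.
rewrite (sum_beta (fun x y : H => s (eps x) * y)); apply: eq_bigr => r _.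
by rewrite -[in LHS](eps_counit_l bialg r.1) mulr_suml; apply: eq_bigr => p _; rewrite mulrA.
Qed.

Hypothesis binj : forall l1 l2, tA (beta Delta l1) (beta Delta l2) -> tensAo t l1 l2.
Hypothesis bsurj : forall m, exists l, tA (beta Delta l) m.
Variables (B : H -> Prop) (Bt : forall a, B (t a)).
Variables (V : zmodType) (g : H -> H -> V).
Hypotheses (g1 : forall x x' y, g (x + x') y = g x y + g x' y)
  (g2 : forall x y y', g x (y + y') = g x y + g x y')
  (gB : forall y z b, B b -> g (y * b) z = g y (b * z)).

Lemma K L L' : tA (beta Delta L) (beta Delta L') -> sumf g L = sumf g L'.
Proof.
move=> e; apply: (binj e g1 g2) => a x y; exact: gB.
Qed.

Definition gam u := proj1_sig (cid (bsurj [:: (u, 1)])).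
Lemma gamP u : tA (beta Delta (gam u)) [:: (u, 1)].
Proof. exact: (proj2_sig (cid (bsurj [:: (u, 1)]))). Qed.

Definition Lg u v := [seq (q.1, q.2 * v) | q <- gam u].

Lemma L1 u v : tA (beta Delta (Lg u v)) [:: (u, v)].
Proof.
apply/tensAP => W f hf.
rewrite big_seq1 /=.
have := (tensAP _ _).1 (gamP u) _ _ (Abal_rmul v hf).
rewrite big_seq1 /= mul1r => <-.
rewrite (sum_beta (fun x y => f x (y * v))) sum_beta big_map; apply: eq_bigr => q _ /=.
by apply: eq_bigr => p _; rewrite mulrA.
Qed.

Definition G u v := sumf g (Lg u v).
Definition flatL m := flatten [seq Lg p.1 p.2 | p <- m].

Lemma Gbar_flat m : \sum_(p <- m) G p.1 p.2 = sumf g (flatL m).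
Proof. by rewrite /flatL big_flatten big_map. Qed.

Lemma beta_flat m : tA (beta Delta (flatL m)) m.
Proof.
elim: m => [|[u v] m IH]; first exact: tA_refl.
rewrite /flatL /= beta_cat -cat1s; apply: tA_cat => //; exact: L1.
Qed.

Lemma Gresp m m' : tA m m' -> \sum_(p <- m) G p.1 p.2 = \sum_(p <- m') G p.1 p.2.
Proof.
move=> e; rewrite !Gbar_flat; apply: K.
apply: tA_trans (beta_flat m) _; apply: tA_trans e _; apply: tA_sym; exact: beta_flat.
Qed.

Lemma G1 x x' y : G (x + x') y = G x y + G x' y.
Proof.
have := @Gresp [:: (x + x', y)] [:: (x, y); (x', y)].
rewrite big_seq1 !big_cons big_nil addr0; apply; apply/tensAP => W f [h1 h2 h3].
by rewrite big_seq1 !big_cons big_nil addr0 h1.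
Qed.

Lemma G2 x y y' : G x (y + y') = G x y + G x y'.
Proof.
have := @Gresp [:: (x, y + y')] [:: (x, y); (x, y')].
rewrite big_seq1 !big_cons big_nil addr0; apply; apply/tensAP => W f [h1 h2 h3].
by rewrite big_seq1 !big_cons big_nil addr0 h2.
Qed.

Lemma G3 a x y : G (t a * x) y = G x (s a * y).
Proof.
have := @Gresp [:: (t a * x, y)] [:: (x, s a * y)].
rewrite !big_seq1; apply; apply/tensAP => W f [h1 h2 h3].
by rewrite !big_seq1 h3.
Qed.

Lemma g0 x : g x 0 = 0.
Proof.
have h := g2 x 0 0; rewrite addr0 in h.
have : g x 0 + g x 0 - g x 0 = g x 0 - g x 0 by rewrite -h.
by rewrite addrK subrr.
Qed.

Hypothesis gam_in : gamma_in s t Delta B.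

Lemma G4 h b v : B b -> eps b = 0 -> G (h * b) v = 0.
Proof.
move=> Bb eb; have [lb [lbB elb]] := gam_in Bb.
have e : tA (beta Delta (Lg (h * b) v))
   (beta Delta [seq (q.1 * r.1, r.2 * q.2 * v) | q <- gam h, r <- lb]).
  apply: tA_trans (L1 _ _) _; apply: tA_sym; apply: Lstar => //; exact: gamP.
rewrite /G (K e) big_allpairs_dep /=.
rewrite big1 // => q _.
transitivity (g q.1 ((\sum_(r <- lb) r.1 * r.2) * (q.2 * v))).
  rewrite mulr_suml (addf_sum (g2 q.1)); apply: eq_big_seq => r /In_mem /lbB Br.
  by rewrite gB // !mulrA.
by rewrite (gamma_sum elb) eb s0 mul0r g0.
Qed.

Lemma G5 y v : HBplus eps B y -> G y v = 0.
Proof.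
case=> l [hl ->].
rewrite (addf_sum (fun x x' => G1 x x' v)) big_seq big1 // => p /In_mem /hl [Bp ep].
exact: G4.
Qed.

Lemma main_g x : coinvariants s t Delta (HBplus eps B) x -> g 1 x = g x 1.
Proof.
move=> hx.
have := hx V G (fun x x' y _ _ => G1 x x' y) (fun x y y' _ => G2 x y y')
   (fun a x y _ => G3 a x y) G5.
rewrite big_cons big_nil addr0 Gbar_flat => e.
have e1 : sumf g (flatL (Delta x)) = g x 1.
  rewrite -sumf1; apply: K; apply: tA_trans (beta_flat _) _.
  apply/tensAP => W f hf; rewrite beta_single; apply: eq_bigr => p _; by rewrite mulr1.
have e2 : G 1 x = g 1 x.
  rewrite /G -sumf1; apply: K; apply: tA_trans (L1 _ _) _.
  apply/tensAP => W f hf; rewrite beta_single.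
  have := (tensAP _ _).1 (Delta_one bialg) _ _ (Abal_rmul x hf).
  by rewrite !big_seq1 mul1r => ->.
by rewrite -e2 -e e1.
Qed.

End Hopf.
End Main.

Section Q.
Variables (V : zmodType) (P : V -> Prop).
Definition genP (x : V) : Prop := forall Q : V -> Prop, Q 0 -> (forall a b, Q a -> Q b -> Q (a - b)) ->
  (forall y, P y -> Q y) -> Q x.
Definition genb : {pred V} := fun x => `[< genP x >].
Lemma genb_zmod : zmod_closed genb.
Proof.
split.
  by rewrite unfold_in; apply/asboolP => Q q0.
move=> a b; rewrite !unfold_in => /asboolP ha /asboolP hb; apply/asboolP; rewrite /genP => Q q0 qB qP.
by apply: (qB); [exact: (ha Q q0 qB qP)|exact: (hb Q q0 qB qP)]. Qed.
HB.instance Definition _ := GRing.isZmodClosed.Build V genb genb_zmod.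
Definition QT := Quotient.quot genb.
Lemma genbP (h0 : P 0) (hB : forall a b, P a -> P b -> P (a - b)) x : genb x <-> P x.
Proof.
rewrite /genb; split => [/asboolP h|px]; first exact: (h _ h0 hB (fun _ p => p)).
by apply/asboolP => Q _ _; apply.
Qed.
Lemma piQ0 x : (\pi_QT x == 0) = (x \in genb).
Proof. by have := Quotient.idealrBE genb x 0; rewrite subr0 raddf0 => ->. Qed.
Lemma piQD : {morph (\pi_QT : V -> QT) : x y / x + y}.
Proof. exact: raddfD. Qed.
End Q.

Theorem theorem2p13 (k : fieldType) (A H : algType k) (s t : A -> H)
  (Delta : H -> seq (H * H)) (eps : H -> A)
  (B : H -> Prop) (delta : H -> seq (H * H)) :
  is_left_Hopf s t Delta eps ->
  s_flat s ->
  is_comodule_subring s t Delta eps B delta ->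
  pure_inclusion B ->
  gamma_in s t Delta B ->
  forall x : H, B x <-> coinvariants s t Delta (HBplus eps B) x.
Proof.
move=> [bialg [binj bsurj]] _ hB pure gin.
have Bt := B_t hB.
have B1 : B 1 by rewrite -(t_one bialg).
have B0 : B 0 by rewrite -(scale0r (1 : H)); apply: (B_scale hB).
have BN : forall y, B y -> B (- y) by move=> y By; rewrite -scaleN1r; apply: (B_scale hB).
have BB : forall a b, B a -> B b -> B (a - b) by move=> a b Ba Bb; apply: (B_add hB) => //; exact: BN.
have hse : Abal s t (fun x y : H => s (eps x) * y).
  split.
  - by move=> x x' y; rewrite (eps_add bialg) (s_add bialg) mulrDl.
  - by move=> x y y'; rewrite mulrDr.
  - by move=> a x y; rewrite (eps_t bialg) (s_mul bialg) mulrA.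
have epsN : forall y, eps (- y) = - eps y.
  by move=> y; rewrite -scaleN1r (eps_scale bialg) scaleN1r.
have epst : forall a, eps (t a) = a.
  by move=> a; rewrite -[t a]mulr1 (eps_t bialg) (eps_one bialg) mul1r.
move=> x; split.
  move=> Bx V f h1 h2 h3 hZ.
  have hf : Abal s t f.
    by split => *; [apply: h1|apply: h2|apply: h3].
  rewrite -((tensAP _ _ _ _).1 (delta_Delta hB Bx) _ _ hf) big_seq1 /=.
  transitivity (\sum_(p <- delta x) f 1 (s (eps p.1) * p.2)).
    apply: eq_big_seq => p /In_mem /(delta_in hB Bx) Bp.
    rewrite -[p.1](subrK (t (eps p.1))) h1 // hZ ?add0r.
      by rewrite addrNK -[t _]mulr1 h3.
    exists [:: (1, p.1 - t (eps p.1))]; split.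
      move=> q [<-|//] /=; split; first exact: BB.
      by rewrite (eps_add bialg) epsN epst subrr.
    by rewrite big_seq1 mul1r.
  rewrite -(addf_sum (fun y y' => h2 1 y y' I)); congr (f 1 _).
  rewrite -[in RHS](eps_counit_l bialg x).
  exact: ((tensAP _ _ _ _).1 (delta_Delta hB Bx) _ _ hse).
move=> hx.
have hPB : forall y, genb B y <-> B y by apply: genbP.
pose pi := (\pi_(QT B) : H -> QT B).
have piE0 : forall y, pi y = 0 <-> B y.
  move=> y; rewrite -hPB.
  have e : (pi y == 0) = genb B y by exact: piQ0.
  by rewrite -e; split => /eqP.
have piEq : forall y y', pi y = pi y' <-> B (y - y').
  move=> y y'; rewrite -piE0 /pi raddfB; split => e; apply/eqP.
    by rewrite subr_eq0; apply/eqP.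
  by rewrite -subr_eq0; apply/eqP.
have piM : forall b y y', B b -> pi y = pi y' -> pi (b * y) = pi (b * y').
  by move=> b y y' Bb /piEq e; apply/piEq; rewrite -mulrBr; apply: (B_mul hB).
have piR : forall n, pi (repr n) = n by move=> n; rewrite /pi reprK.
pose act (h : H) (n : QT B) := pi (h * repr n).
have pD : forall y y', pi (y + y') = pi y + pi y' by move=> y y'; rewrite /pi raddfD.
have hmod : left_Bmod B act.
  split.
  - move=> b n n' Bb; rewrite /act -pD -mulrDr; apply: piM => //.
    by rewrite pD /pi !reprK.
  - by move=> b b' n _ _; rewrite /act mulrDl pD.
  - move=> b b' n Bb Bb'; rewrite /act -mulrA; apply: piM => //.
  - by move=> n; rewrite /act mul1r /pi reprK.
have H1 : tensB_gen B B act [:: (1, pi x)] [::].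
  apply: (pure _ act hmod).
  - by move=> p [<-|].
  - by [].
  move=> V f h1 h2 h3; rewrite big_seq1 big_nil /=.
  have f0 : forall y, f y 0 = 0.
    by move=> y; have := addf_sum (fun n n' => h2 y n n' I) [::] (fun i : nat => 0); rewrite !big_nil.
  have actpi : forall b z, B b -> act b (pi z) = pi (b * z).
    by move=> b z Bb; rewrite /act; apply: piM => //; rewrite /pi reprK.
  have := @main_g k A H s t Delta eps bialg binj bsurj B Bt V (fun y z => f y (pi z)).
  move=> /(_ _ _ _ gin x hx) /= ->.
  - by have /piE0 -> := B1; rewrite f0.
  - by move=> y y' z; apply: h1.
  - by move=> y z z'; rewrite pD h2.
  - by move=> y z b Bb; rewrite h3 // actpi.
case: hmod => m1 m2 m3 m4.
have := H1 _ act m2 m1 m3.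
by rewrite big_seq1 big_nil /= m4 piE0.
Qed.
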